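(* Let $a,r,h,g$ be positive integers with $ga+h<gr$, and put $n=rg$. Then there exists an MR $(n,r,h,a)$-LRC over a field of size \[\ell\le\left(\max\left\{\tilde O\!\left(\tfrac nr\right),\ (2r)^{r}\right\}\right)^{\min\{h,\frac nr\}}.\]
   Context: $\tilde O(f)$ denotes $f\cdot(\log f)^{O(1)}$. Definition: let $\ell$ be a prime power, $a,g,r,h$ positive integers with $ga+h<gr$, $n=gr$, $k=n-ga-h$. An MR (maximally recoverable) $(n,r,h,a)_\ell$-LRC is an $[n,k]$ linear code over $\mathbb{F}_\ell$ with a parity-check matrix $H$ of the block form whose first $ga$ rows are block diagonal with diagonal blocks $A_1,\dots,A_g$ (each $a\times r$, coordinates split into $g$ consecutive groups of size $r$) and whose last $h$ rows are $(D_1|\cdots|D_g)$ with each $D_i$ of size $h\times r$, such that (i) each $A_i$ generates an $[r,a,r-a+1]_\ell$ MDS code, and (ii) every set of $ag+h$ columns of $H$ consisting of any $a$ columns from each group together with any $h$ further columns is linearly independent over $\mathbb{F}_\ell$. ''Over a field of size $\ell$'' means an MR $(n,r,h,a)_\ell$-LRC. *)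

(* Defs.v *)
From HB Require Import structures.
From mathcomp Require Import all_boot all_order all_algebra all_field.
Set Implicit Arguments. Unset Strict Implicit. Unset Printing Implicit Defensive.
Import GRing.Theory.
Local Open Scope ring_scope.

Section LRC.
Variable F : fieldType.

Definition mxget m n (M : 'M[F]_(m, n)) (i j : nat) : F :=
  match (insub i : option 'I_m), (insub j : option 'I_n) with
  | Some i', Some j' => M i' j'
  | _, _ => 0
  end.

Definition wt n (v : 'rV[F]_n) : nat := #|[set j : 'I_n | v 0 j != 0]|.

Definition MDS_generator k n (G : 'M[F]_(k, n)) : Prop :=
  [/\ \rank G = k,
      (forall v : 'rV[F]_n, (v <= G)%MS -> v != 0 -> (n - k + 1 <= wt v)%N)
    & exists2 v : 'rV[F]_n, (v <= G)%MS /\ v != 0 & wt v = (n - k + 1)%N].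

(* The parity-check matrix H of block form: columns q = i*r + j (group i,
   position j); first g*a rows block diagonal with blocks A_i, last h rows
   (D_1 | ... | D_g). *)
Definition lrc_pcm g r h a (A : 'I_g -> 'M[F]_(a, r)) (D : 'I_g -> 'M[F]_(h, r))
  : 'M[F]_(g * a + h, g * r) :=
  \matrix_(p < g * a + h, q < g * r)
    match (insub (q %/ r)%N : option 'I_g) with
    | Some i =>
        if (p < g * a)%N then
          (if (p %/ a == q %/ r)%N then mxget (A i) (p %% a) (q %% r) else 0)
        else mxget (D i) (p - g * a) (q %% r)
    | None => 0
    end.

Definition cols_independent m N (H : 'M[F]_(m, N)) (S : {set 'I_N}) : Prop :=
  row_free (colsub (@enum_val _ (mem S)) H)^T.

Definition MR_condition g r h a (H : 'M[F]_(g * a + h, g * r)) : Prop :=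
  forall (T : 'I_g -> {set 'I_(g * r)}) (E : {set 'I_(g * r)}),
    (forall i : 'I_g, T i \subset [set q : 'I_(g * r) | (q %/ r)%N == i] /\ #|T i| = a) ->
    #|E| = h ->
    [disjoint E & \bigcup_(i < g) T i] ->
    cols_independent H (E :|: \bigcup_(i < g) T i).

Definition MR_LRC g r h a : Prop :=
  exists (A : 'I_g -> 'M[F]_(a, r)) (D : 'I_g -> 'M[F]_(h, r)),
    (forall i, MDS_generator (A i)) /\ MR_condition (lrc_pcm A D).

End LRC.

(* Main.v *)
Require Import Defs.
From HB Require Import structures.
From mathcomp Require Import all_boot all_order all_algebra all_field.
From mathcomp Require Import zify.
Set Implicit Arguments. Unset Strict Implicit. Unset Printing Implicit Defensive.
Import GRing.Theory.
Local Open Scope ring_scope.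

Lemma ext_field (F : finFieldType) p k :
  p \in [pchar F] -> (0 < k)%N ->
  {L : fieldExtType F | #|FinFieldExtType L| = (#|F| ^ k)%N}.
Proof.
move=> pcharF k_gt0; set m := (#|F| ^ k)%N.
have F_gt1 := finNzRing_gt1 F.
have m_gt1: (m > 1)%N by rewrite /m (ltn_exp2l 0).
have m_gt0 := ltnW m_gt1; have m1_gt0: (m.-1 > 0)%N by rewrite -ltnS prednK.
have mF0 : (m%:R : F) = 0.
  have cF := card_pprimeChar pcharF.
  have -> : m = (p ^ (logn p #|F| * k))%N.
    rewrite /m expnM; congr (_ ^ _)%N; exact: cF.
  have n_gt0 : (0 < logn p #|F| * k)%N.
    rewrite muln_gt0 k_gt0 andbT lt0n; apply/negP => /eqP e.
    move: F_gt1; rewrite [X in (_ < X)%N]cF /= e //.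
  by rewrite natrX (pcharf0 pcharF) expr0n gtn_eqF.
pose q := 'X^m - 'X : {poly F}.
have Dq (R : nzRingType) : ('X^m - 'X : {poly R}) = ('X^(m.-1) - 1) * ('X - 0).
  by rewrite subr0 mulrBl mul1r -exprSr prednK.
have /FinSplittingFieldFor[/= L splitLq]: q != 0.
  by rewrite /q Dq monic_neq0 ?rpredM ?monicXsubC ?monicXnsubC.
rewrite [map_poly _ _]rmorphB rmorphXn /= map_polyX in splitLq.
pose Fm := FinFieldExtType L; exists L => //.
have /finField_galois_generator[/= a _ Da]: (1 <= {:L})%VS by apply: sub1v.
pose Em := fixedSpace (a ^+ k)%g; rewrite dimv1 expn1 in Da.
have{splitLq} [zs DqL defL] := splitLq.
have Uzs: uniq zs.
  rewrite -separable_prod_XsubC -(eqp_separable DqL) Dq separable_root andbC.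
  rewrite /root !hornerE subr_eq0 eq_sym expr0n gtn_eqF ?oner_eq0 //=.
  rewrite cyclotomic.separable_Xn_sub_1 // -subn1 natrB // subr_eq0.
  rewrite -(rmorph_nat (in_alg L)) mF0 rmorph0 eq_sym oner_eq0 //.
suffices /eq_card->: Fm =i zs.
  apply: succn_inj; rewrite (card_uniqP _) //= -(size_prod_XsubC _ id).
  by rewrite -(eqp_size DqL) size_polyDl size_polyXn // size_polyN size_polyX.
have in_zs: zs =i Em.
  move=> z; rewrite -root_prod_XsubC -(eqp_root DqL) (sameP fixedSpaceP eqP).
  rewrite /root !hornerE subr_eq0 /= /m; congr (_ == z).
  elim: (k) => [|i IHi]; first by rewrite gal_id.
  by rewrite expgSr expnSr exprM IHi galM ?Da ?memvf.
suffices defEm: Em = {:L}%VS by move=> z; rewrite in_zs defEm memvf.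
apply/eqP; rewrite eqEsubv subvf -defL -[Em]subfield_closed agenvS //.
by rewrite subv_add sub1v; apply/span_subvP=> z; rewrite in_zs.
Qed.

Lemma vander_zero (K : fieldType) (I : finType) (P : pred I) (x v : I -> K) m :
  {in P &, injective x} -> (#|P| <= m)%N ->
  (forall s, (s < m)%N -> \sum_(i in P) v i * x i ^+ s = 0) ->
  forall i, i \in P -> v i = 0.
Proof.
move=> xinj Pm H i0 Pi0.
pose sq := [seq i <- enum P | i != i0].
pose p := \prod_(i <- sq) ('X - (x i)%:P).
have sp : (size p <= m)%N.
  rewrite /p size_prod_XsubC.
  apply: leq_trans Pm.
  rewrite /sq cardE.
  have -> : [seq i <- enum P | i != i0] = rem i0 (enum P).
    by rewrite rem_filter ?enum_uniq.
  rewrite size_rem ?mem_enum // prednK //.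
  by rewrite -cardE; apply/card_gt0P; exists i0.
have E : \sum_(i in P) v i * p.[x i] = 0.
  under eq_bigr => i _ do rewrite horner_coef mulr_sumr.
  rewrite exchange_big /= big1 // => s _.
  under eq_bigr => i _ do rewrite mulrCA.
  rewrite -mulr_sumr H ?mulr0 //.
  exact: leq_trans (ltn_ord s) sp.
rewrite (bigD1 i0) //= big1 ?addr0 in E; last first.
  move=> i /andP[Pi ni0]; rewrite /p horner_prod (big_rem i) /=.
    by rewrite !hornerE subrr /= mulr0 mul0r.

  by rewrite /sq mem_filter ni0 mem_enum.
move/eqP: E; rewrite mulf_eq0 => /orP[/eqP // |].
rewrite /p horner_prod prodf_seq_eq0 => /hasP[i].
rewrite /sq mem_filter mem_enum => /andP[ni0 Pi].
rewrite !hornerE subr_eq0 => /eqP e.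
by move: ni0; rewrite (xinj _ _ Pi Pi0 (esym e)) eqxx.
Qed.

Lemma coefs_zero (K : fieldType) (I : finType) (P : pred I) (x : I -> K) a
  (u : 'I_a -> K) :
  {in P &, injective x} -> (a <= #|P|)%N ->
  (forall i, i \in P -> \sum_(k < a) u k * x i ^+ k = 0) -> forall k, u k = 0.
Proof.
move=> xinj aP H k.
pose p := rVpoly (\row_(k < a) u k).
have sp : (size p <= a)%N by exact: size_poly.
have pv i : p.[x i] = \sum_(k < a) u k * x i ^+ k.
  rewrite (horner_coef_wide _ sp); apply: eq_bigr => l _.
  by rewrite coef_rVpoly_ord mxE.
have p0 : p = 0.
  apply/eqP; apply/negPn/negP => pn0.
  have := max_poly_roots (rs := [seq x i | i <- enum P]) pn0.
  rewrite size_map -cardE.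
  have -> : all (root p) [seq x i | i <- enum P].
    by apply/allP => z /mapP[i]; rewrite mem_enum => Pi ->; apply/rootP; rewrite pv H.
  rewrite map_inj_in_uniq ?enum_uniq; last by move=> i j; rewrite !mem_enum; apply: xinj.
  move=> /(_ isT isT); rewrite ltnNge (leq_trans sp aP) //.
have := congr1 (fun q : {poly K} => q`_k) p0.
by rewrite coef_rVpoly_ord mxE coef0.
Qed.

Lemma card_ord_lt r k : (k <= r)%N -> #|[set j : 'I_r | (j < k)%N]| = k.
Proof.
move=> kr.
have -> : [set j : 'I_r | (j < k)%N] = [set widen_ord kr j | j : 'I_k].
  apply/setP => j; rewrite inE; apply/idP/imsetP => [jk|[l _ ->]] //=.
  by exists (Ordinal jk) => //; apply: val_inj.
rewrite card_imset ?card_ord //; move=> x y /(congr1 val) e; exact: val_inj.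
Qed.

Lemma vander_MDS (K : fieldType) a r (al : 'I_r -> K) :
  injective al -> (0 < a)%N -> (a <= r)%N ->
  MDS_generator (\matrix_(k < a, j < r) al j ^+ k).
Proof.
move=> alinj a0 ar; set A := \matrix_(k < a, j < r) al j ^+ k.
have uA u j : (u *m A) 0 j = \sum_(k < a) u 0 k * al j ^+ k.
  by rewrite mxE; apply: eq_bigr => k _; rewrite mxE.
split.
- apply/eqP; apply: inj_row_free => u uA0; apply/rowP => k; rewrite mxE.
  apply: (@coefs_zero K 'I_r predT al a (fun k => u 0 k)) => //.
    by move=> i j _ _; apply: alinj.
  by rewrite card_ord.
  by move=> j _; rewrite -uA uA0 mxE.
- move=> v /submxP[u ->] vn0; rewrite /wt.
  rewrite leqNgt; apply/negP => lt.
  move/negP: vn0; apply; apply/eqP.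
  suff u0 : u = 0 by rewrite u0 mul0mx.
  apply/rowP => k; rewrite mxE.
  pose Z := [set j : 'I_r | (u *m A) 0 j == 0].
  apply: (@coefs_zero K 'I_r (mem Z) al a (fun k => u 0 k)) => //.
  + by move=> i j _ _; apply: alinj.
  + have := cardC (mem Z); rewrite card_ord.
    have -> : #|[predC mem Z]| = #|[set j : 'I_r | (u *m A) 0 j != 0]|.
      by apply: eq_card => j; rewrite !inE.
    move=> e; set w := #|[set j | (u *m A) 0 j != 0]| in lt e *. set z := #|mem Z| in e *. clearbody w z; move: lt ar e; lia.
  + by move=> j; rewrite inE -uA => /eqP.
- have a1r : (a.-1 <= r)%N by rewrite (leq_trans (leq_pred a)).
  pose p := \prod_(i < a.-1) ('X - (al (widen_ord a1r i))%:P).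
  have sp : size p = a.
    by rewrite /p size_prod_XsubC /index_enum -enumT size_enum_ord prednK.
  have rootp j : (p.[al j] == 0) = (j < a.-1)%N.
    rewrite /p horner_prod prodf_seq_eq0; apply/hasP/idP => [[i _]|ja].
      by rewrite /= !hornerE subr_eq0 => /eqP /alinj ->; exact: (ltn_ord i).
    exists (Ordinal ja); first by rewrite /index_enum -enumT mem_enum.
    rewrite !hornerE subr_eq0; apply/eqP; congr (al _); exact: val_inj.
  pose u := \row_(k < a) p`_k.
  have vj j : (u *m A) 0 j = p.[al j].
    rewrite uA (horner_coef_wide _ (eq_leq sp)); apply: eq_bigr => k _.
    by rewrite mxE.
  have wtv : wt (u *m A) = (r - a + 1)%N.
    rewrite /wt.
    have -> : [set j | (u *m A) 0 j != 0] = ~: [set j : 'I_r | (j < a.-1)%N].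
      by apply/setP => j; rewrite !inE vj rootp.
    rewrite cardsCs setCK card_ord_lt // card_ord.
    by move: a0 ar; clear; lia.
  exists (u *m A) => //; split; first exact: submxMl.
  apply/eqP => v0; move: wtv; rewrite v0 /wt.
  rewrite (eq_card (B := pred0)) ?card0; last by move=> j; rewrite !inE mxE eqxx.
  by move: ar; clear; lia.
Qed.

Section Frob.
Variables (F0 : finFieldType) (p : nat) (pcharF : p \in [pchar F0]).
Variable L : fieldExtType F0.
Local Notation q := #|F0|.

Lemma pcharL : p \in [pchar L].
Proof. by rewrite pchar_lalg. Qed.

Lemma q_nat s : [pchar L].-nat (q ^ s)%N.
Proof.
have cF := card_pprimeChar pcharF.
rewrite [X in (X ^ s)%N]cF -expnM.
by rewrite pnatX (pnatE _ (pcharf_prime pcharL)) pcharL.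
Qed.

Lemma frobD s (x y : L) : (x + y) ^+ (q ^ s) = x ^+ (q ^ s) + y ^+ (q ^ s).
Proof. exact: exprDn_pchar (q_nat s). Qed.

Lemma frob_sum s (I : Type) (r : seq I) (P : pred I) (f : I -> L) :
  (\sum_(i <- r | P i) f i) ^+ (q ^ s) = \sum_(i <- r | P i) f i ^+ (q ^ s).
Proof.
apply: (big_morph (fun x => x ^+ (q ^ s))) => [x y|]; first exact: frobD.
by rewrite expr0n expn_eq0 (negPf (lt0n_neq0 (ltnW (finNzRing_gt1 F0)))) ?andbF.
Qed.

Lemma expf_cardn s (c : F0) : c ^+ (q ^ s) = c.
Proof.
elim: s => [|s IH]; first by rewrite expr1.
by rewrite expnSr exprM IH expf_card.
Qed.

Lemma frobZ s (c : F0) (x : L) : (c *: x) ^+ (q ^ s) = c *: x ^+ (q ^ s).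
Proof. by rewrite exprZn expf_cardn. Qed.

Lemma moore_rows h (mu : 'I_h -> L) :
  (forall c : 'I_h -> F0, \sum_i c i *: mu i = 0 -> forall i, c i = 0) ->
  row_free (\matrix_(s < h, t < h) mu t ^+ (q ^ s)).
Proof.
move=> indep; apply: inj_row_free => w Hw.
have Ht t : \sum_(s < h) w 0 s * mu t ^+ (q ^ s) = 0.
  move/rowP: Hw => /(_ t); rewrite !mxE => e; rewrite -[RHS]e; apply: eq_bigr => s _; rewrite mxE.
  by [].
pose P := \sum_(s < h) w 0 s *: 'X^(q ^ s) : {poly L}.
have PZ (c : 'I_h -> F0) : P.[\sum_t c t *: mu t] = 0.
  rewrite /P horner_sum.
  under eq_bigr => s _ do rewrite hornerZ hornerXn frob_sum.
  under eq_bigr => s _ do (under eq_bigr => t _ do rewrite frobZ).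
  under eq_bigr => s _ do rewrite mulr_sumr.
  rewrite exchange_big /= big1 // => t _.
  under eq_bigr => s _ do rewrite -scalerAr.
  by rewrite -scaler_sumr Ht scaler0.
apply/rowP => s0; rewrite mxE; apply/eqP; apply/negPn/negP => ws0.
have q_gt1 := finNzRing_gt1 F0.
have P0 : P != 0.
  apply/eqP => /(congr1 (fun p : {poly L} => p`_(q ^ s0))).
  rewrite coef0 /P coef_sum (bigD1 s0) //= big1 ?addr0.
    by rewrite coefZ coefXn eqxx mulr1 => /eqP; rewrite (negPf ws0).
  move=> s ns; rewrite coefZ coefXn eqn_exp2l // .
  by rewrite (inj_eq val_inj) eq_sym (negPf ns) mulr0.
have sP : (size P <= (q ^ h.-1).+1)%N.
  rewrite /P; apply: leq_trans (size_sum _ _ _) _.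
  apply/bigmax_leqP => s _; apply: leq_trans (size_scale_leq _ _) _.
  rewrite size_polyXn ltnS leq_exp2l //.
  by rewrite -ltnS prednK // (leq_ltn_trans _ (ltn_ord s)).
pose rs := map (fun c : {ffun 'I_h -> F0} => \sum_t c t *: mu t) (enum {ffun 'I_h -> F0}).
have urs : uniq rs.
  rewrite map_inj_uniq ?enum_uniq // => c c' e.
  apply/ffunP => t; apply/eqP; rewrite -subr_eq0; apply/eqP.
  move: t; apply: (indep (fun t => c t - c' t)).
  under eq_bigr => t _ do rewrite scalerBl.
  by rewrite sumrB e subrr.
have Prs : all (root P) rs.
  by apply/allP => z /mapP[c _ ->]; apply/rootP; apply: PZ.
have := max_poly_roots P0 Prs urs.
rewrite size_map -cardE card_ffun card_ord.
move=> /leq_trans /(_ sP); rewrite ltnS.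
have h_gt0 : (0 < h)%N by apply: leq_ltn_trans (ltn_ord s0).
rewrite -(prednK h_gt0) expnS -{2}(mul1n (_ ^ _)%N) leq_mul2r.
by rewrite expn_eq0 eqn0Ngt (ltnW q_gt1) /= leqNgt q_gt1.
Qed.

Lemma moore_cols h (mu y : 'I_h -> L) :
  (forall c : 'I_h -> F0, \sum_i c i *: mu i = 0 -> forall i, c i = 0) ->
  (forall s : 'I_h, \sum_t y t * mu t ^+ (q ^ s) = 0) -> forall t, y t = 0.
Proof.
move=> indep Hs.
have U := moore_rows indep; rewrite row_free_unit in U.
pose Y := \col_t y t.
have MY : (\matrix_(s < h, t < h) mu t ^+ (q ^ s)) *m Y = 0.
  apply/colP => s; rewrite !mxE -[RHS](Hs s); apply: eq_bigr => t _.
  by rewrite !mxE mulrC.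
have : Y = 0 by rewrite -(mulKmx U Y) MY mulmx0.
by move=> /colP Y0 t; have := Y0 t; rewrite !mxE.
Qed.
End Frob.

Lemma kernel_vec (K : fieldType) (I : finType) (x : I -> K) (T : pred I) (t : I) a :
  {in T &, injective x} -> #|T| = a -> t \notin T ->
  exists c : I -> K, [/\ c t = 1, (forall i, i \notin T -> i != t -> c i = 0) &
     forall k, (k < a)%N -> \sum_i c i * x i ^+ k = 0].
Proof.
move=> xinj Ta tT.
pose e := @enum_val I (mem T).
pose V : 'M[K]_(#|T|, a) := \matrix_(l, k) x (e l) ^+ k.
have rfV : row_free V.
  apply: inj_row_free => u uV; apply/rowP => l; rewrite mxE.
  apply: (vander_zero (P := predT) (x := fun l => x (e l)) (v := fun l => u 0 l) (m := a)) => //.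
  - move=> l1 l2 _ _ /xinj; rewrite !enum_valP => /(_ isT isT); exact: enum_val_inj.
  - by rewrite card_ord Ta.
  - move=> k ka; have := congr1 (fun M : 'rV_a => M 0 (Ordinal ka)) uV.
    rewrite !mxE => ee; rewrite -[RHS]ee; apply: eq_bigr => l0 _; rewrite mxE.
    by [].
have rfull : row_full V.
  by rewrite /row_full; move: rfV; rewrite /row_free => /eqP ->; rewrite Ta.
pose b : 'rV[K]_a := - \row_k x t ^+ k.
have /submxP[w bw] : (b <= V)%MS by rewrite submx_full.
pose c i := (i == t)%:R + \sum_l w 0 l * (e l == i)%:R.
have eT l : e l \in T by apply: enum_valP.
exists c; split.
- rewrite /c eqxx big1 ?addr0 // => l _.
  have -> : (e l == t) = false by apply/negbTE; apply: contraNneq tT => <-.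
  by rewrite mulr0.
- move=> i iT it; rewrite /c (negPf it) add0r big1 // => l _.
  have -> : (e l == i) = false by apply/negbTE; apply: contraNneq iT => <-.
  by rewrite mulr0.
- move=> k ka; rewrite /c.
  under eq_bigr => i _ do rewrite mulrDl.
  rewrite big_split /=.
  rewrite (bigD1 t) //= eqxx mul1r big1 ?addr0; last first.
    by move=> i it; rewrite (negPf it) mul0r.
  under eq_bigr => i _ do rewrite mulr_suml.
  rewrite exchange_big /=.
  have -> : \sum_l \sum_i w 0 l * (e l == i)%:R * x i ^+ k = (w *m V) 0 (Ordinal ka).
    rewrite mxE; apply: eq_bigr => l _; rewrite mxE /=.
    rewrite (bigD1 (e l)) //= eqxx mulr1 big1 ?addr0 // => i il.
    by rewrite eq_sym (negPf il) mulr0 mul0r.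
  by rewrite -bw !mxE subrr.
Qed.

Section Index.
Variables g r : nat.

Lemma ord_r_gt0 (q : 'I_(g * r)) : (0 < r)%N.
Proof. by case: q => q /=; case: r => //; rewrite muln0. Qed.

Lemma grp_subproof (q : 'I_(g * r)) : (q %/ r < g)%N.
Proof. by rewrite ltn_divLR ?ord_r_gt0 //; case: q. Qed.

Definition grp (q : 'I_(g * r)) : 'I_g := Ordinal (grp_subproof q).
Definition pos (q : 'I_(g * r)) : 'I_r := Ordinal (ltn_pmod q (ord_r_gt0 q)).

Lemma idx_subproof (i : 'I_g) (j : 'I_r) : (i * r + j < g * r)%N.
Proof.
case: i j => i ig [j jr] /=.
have : (i.+1 * r <= g * r)%N by rewrite leq_mul2r ig orbT.
by rewrite mulSn; lia.
Qed.

Definition idx (i : 'I_g) (j : 'I_r) : 'I_(g * r) := Ordinal (idx_subproof i j).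

Lemma grp_idx i j : grp (idx i j) = i.
Proof.
have r0 : (0 < r)%N by apply: leq_ltn_trans (ltn_ord j).
by apply: val_inj => /=; rewrite divnMDl // divn_small // addn0.
Qed.

Lemma pos_idx i j : pos (idx i j) = j.
Proof.
apply: val_inj => /=; rewrite modnMDl modn_small //.
Qed.

Lemma idx_grp_pos q : idx (grp q) (pos q) = q.
Proof. by apply: val_inj => /=; rewrite -divn_eq. Qed.

Lemma pos_inj q q' : grp q = grp q' -> pos q = pos q' -> q = q'.
Proof. by move=> e1 e2; rewrite -(idx_grp_pos q) -(idx_grp_pos q') e1 e2. Qed.

Lemma sum_group (V : nmodType) (F : 'I_(g * r) -> V) (i : 'I_g) :
  \sum_(q | grp q == i) F q = \sum_(j < r) F (idx i j).
Proof.
rewrite (reindex_onto (idx i) pos) /=; last by move=> q /eqP <-; rewrite idx_grp_pos.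
by apply: eq_bigl => j; rewrite grp_idx pos_idx !eqxx.
Qed.

Lemma sum_by_group (V : nmodType) (F : 'I_(g * r) -> V) :
  \sum_q F q = \sum_(i < g) \sum_(j < r) F (idx i j).
Proof.
rewrite (partition_big grp predT) //=; apply: eq_bigr => i _.
exact: sum_group.
Qed.
End Index.

Lemma mxgetE (F : fieldType) m n (M : 'M[F]_(m, n)) (i : 'I_m) (j : 'I_n) :
  mxget M i j = M i j.
Proof.
rewrite /mxget; case: insubP => [i' _ ei|]; last by rewrite ltn_ord.
case: insubP => [j' _ ej|]; last by rewrite ltn_ord.
by congr (M _ _); apply: val_inj.
Qed.

Section Gamma.
Variables (F0 : finFieldType) (E L : fieldExtType F0) (g r m : nat).
Variables (x : 'I_g -> E) (xinj : injective x).
Hypothesis rw : (r <= \dim {:E})%N.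
Hypothesis hm : (m * \dim {:E} <= \dim {:L})%N.
Local Notation w := (\dim {:E}).

Definition lam (j : 'I_r) : E := (vbasis {:E})`_j.

Definition Mq (q : 'I_(g * r)) : 'M[F0]_(m, w) :=
  \matrix_(s < m, k < w) coord (vbasis {:E}) k (x (grp q) ^+ s * lam (pos q)).

Definition gam (q : 'I_(g * r)) : L :=
  \sum_(l < \dim {:L}) mxget (Mq q) (l %/ w) (l %% w) *: (vbasis {:L})`_l.

Lemma gamma_indep (G' : {set 'I_g}) (d : 'I_(g * r) -> F0) :
  (#|G'| <= m)%N -> (forall q, grp q \notin G' -> d q = 0) ->
  \sum_q d q *: gam q = 0 -> forall q, d q = 0.
Proof.
move=> Gm dG S0 q0.
have r0 := ord_r_gt0 q0.
have w0 : (0 < w)%N by apply: leq_trans rw.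
have freeL := basis_free (vbasisP (fullv : {vspace L})).
have freeE := basis_free (vbasisP (fullv : {vspace E})).
have C1 (l : 'I_(\dim {:L})) :
    \sum_q d q * mxget (Mq q) (l %/ w) (l %% w) = 0.
  have /freeP FL := freeL.
  move: l; apply: FL; rewrite -[RHS]S0.
  under eq_bigr => l _ do rewrite scaler_suml.
  rewrite exchange_big /=; apply: eq_bigr => q _.
  rewrite scaler_sumr; apply: eq_bigr => l _; by rewrite scalerA.
have C2 (s : 'I_m) (k : 'I_w) :
    \sum_q d q * coord (vbasis {:E}) k (x (grp q) ^+ s * lam (pos q)) = 0.
  have lt : (s * w + k < \dim {:L})%N.
    apply: leq_trans hm; case: s k => s sm [k kw] /=.
    have : (s.+1 * w <= m * w)%N by rewrite leq_mul2r sm orbT.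
    rewrite mulSn; lia.
  have := C1 (Ordinal lt); rewrite /= divnMDl // divn_small // addn0.
  rewrite modnMDl modn_small //.
  move=> e; rewrite -[RHS]e; apply: eq_bigr => q _.
  by rewrite (mxgetE (Mq q) s k) mxE.
have C3 (s : 'I_m) : \sum_q d q *: (x (grp q) ^+ s * lam (pos q)) = 0.
  rewrite (coord_vbasis (memvf (\sum_q d q *: (x (grp q) ^+ s * lam (pos q))))).
  apply: big1 => k _.
  rewrite linear_sum /=.
  under eq_bigr => q _ do rewrite linearZ /=.
  by rewrite C2 scale0r.
pose v (i : 'I_g) := \sum_(j < r) d (idx i j) *: lam j.
have C4 (s : 'I_m) : \sum_(i in G') v i * x i ^+ s = 0.
  rewrite -[RHS](C3 s) sum_by_group [RHS](bigID (mem G')) /=.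
  rewrite [X in _ = _ + X]big1 ?addr0; last first.
    move=> i iG; apply: big1 => j _; rewrite dG ?scale0r //.
    by rewrite grp_idx.
  apply: eq_bigr => i _; rewrite /v mulr_suml; apply: eq_bigr => j _.
  by rewrite grp_idx pos_idx -scalerAl mulrC.
have v0 i : v i = 0.
  case: (boolP (i \in G')) => iG.
    apply: (vander_zero (P := mem G') (x := x) (v := v) (m := m)) => //.
      by move=> a b _ _; apply: xinj.
    move=> s sm; exact: (C4 (Ordinal sm)).
  by apply: big1 => j _; rewrite dG ?scale0r // grp_idx.
rewrite -(idx_grp_pos q0).
have := congr1 (coord (vbasis {:E}) (widen_ord rw (pos q0))) (v0 (grp q0)).
rewrite linear0 linear_sum /=.
under eq_bigr => j _ do rewrite linearZ /=.
rewrite (bigD1 (pos q0)) //= big1 ?addr0.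
  rewrite /lam.
  have -> : (vbasis {:E})`_(pos q0) = (vbasis {:E})`_(widen_ord rw (pos q0)) by [].
  by rewrite coord_free // eqxx mulr1.
move=> j jn; rewrite /lam.
have -> : (vbasis {:E})`_j = (vbasis {:E})`_(widen_ord rw j) by [].
rewrite coord_free //.
have -> : (widen_ord rw j == widen_ord rw (pos q0)) = false.
  by apply/negbTE; move: jn; apply: contra => /eqP/(congr1 val) /= e; apply/eqP/val_inj.
by rewrite mulr0.
Qed.
End Gamma.

Lemma mxgetE' (F : fieldType) m n (M : 'M[F]_(m, n)) i j (im : (i < m)%N) (jn : (j < n)%N) :
  mxget M i j = M (Ordinal im) (Ordinal jn).
Proof. by rewrite -(mxgetE M (Ordinal im) (Ordinal jn)). Qed.
Arguments mxgetE' [F m n] M [i j] im jn.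

Section Hentries.
Variables (F : fieldType) (g r h a : nat) (A : 'I_g -> 'M[F]_(a, r)) (D : 'I_g -> 'M[F]_(h, r)).

Lemma H_top (p : 'I_(g * a + h)) (q : 'I_(g * r)) (pa : (p < g * a)%N) :
  lrc_pcm A D p q =
  if (p %/ a == grp q)%N then mxget (A (grp q)) (p %% a) (pos q) else 0.
Proof.
rewrite /lrc_pcm mxE insubT ?grp_subproof // => gq /=.
rewrite pa; have -> : Sub (q %/ r)%N gq = grp q by apply: val_inj.
by [].
Qed.

Lemma H_bot (p : 'I_(g * a + h)) (q : 'I_(g * r)) (pa : ~~ (p < g * a)%N) :
  lrc_pcm A D p q = mxget (D (grp q)) (p - g * a) (pos q).
Proof.
rewrite /lrc_pcm mxE insubT ?grp_subproof // => gq /=.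
rewrite (negPf pa); have -> : Sub (q %/ r)%N gq = grp q by apply: val_inj.
by [].
Qed.
End Hentries.

Lemma moore_pred (F0 : finFieldType) (pc : nat) (pcharF : pc \in [pchar F0])
  (L : fieldExtType F0) (I : finType) (A : pred I) (mu y : I -> L) :
  (forall b : I -> F0, \sum_(i in A) b i *: mu i = 0 -> forall i, i \in A -> b i = 0) ->
  (forall s, (s < #|A|)%N -> \sum_(i in A) y i * mu i ^+ (#|F0| ^ s) = 0) ->
  forall i, i \in A -> y i = 0.
Proof.
move=> indep Hs i Ai.
have := @moore_cols F0 pc pcharF L #|A| (fun l => mu (enum_val l)) (fun l => y (enum_val l)).
move=> /(_ _ _ (enum_rank_in Ai i)); rewrite enum_rankK_in //; apply.
- move=> c' Hc' l.
  pose b j := c' (enum_rank_in (enum_valP l) j).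
  have := indep b _ (enum_val l) (enum_valP l).
  rewrite /b enum_valK_in; apply.
  rewrite big_enum_val -[RHS]Hc'; apply: eq_bigr => l' _.
  by rewrite enum_valK_in.
- by move=> s; have := Hs s (ltn_ord s); rewrite big_enum_val.
Qed.

Section Construct.
Variables (F0 : finFieldType) (pc : nat) (pcharF : pc \in [pchar F0]).
Variables (Ef L : fieldExtType F0) (g r h a m : nat).
Variables (x : 'I_g -> Ef) (xinj : injective x) (al0 : 'I_r -> F0).
Hypothesis al0inj : injective al0.
Hypotheses (rw : (r <= \dim {:Ef})%N) (hm : (m * \dim {:Ef} <= \dim {:L})%N).
Hypotheses (hgm : (minn h g <= m)%N) (a0 : (0 < a)%N) (ar : (a <= r)%N).

Local Notation Q := #|F0|.
Local Notation gm := (gam L m x).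

Definition al (j : 'I_r) : L := in_alg L (al0 j).
Definition Amat : 'M[L]_(a, r) := \matrix_(k < a, j < r) al j ^+ k.
Definition Dmat (i : 'I_g) : 'M[L]_(h, r) :=
  \matrix_(s < h, j < r) gm (idx i j) ^+ (Q ^ s).
Local Notation H := (lrc_pcm (fun _ => Amat) Dmat).

Lemma Htop (p : 'I_(g * a + h)) q (pa : (p < g * a)%N) :
  H p q = if (p %/ a == grp q)%N then al (pos q) ^+ (p %% a) else 0.
Proof.
rewrite H_top //; case: ifP => // _.
rewrite (mxgetE' _ (ltn_pmod _ a0) (ltn_ord (pos q))) /Amat mxE.
by have -> : Ordinal (ltn_ord (pos q)) = pos q by apply: val_inj.
Qed.

Lemma Hbot (p : 'I_(g * a + h)) q (pa : ~~ (p < g * a)%N) :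
  H p q = gm q ^+ (Q ^ (p - g * a)).
Proof.
have ph : (p - g * a < h)%N.
  by case: p pa => p /= pl; rewrite -ltnNge => pa; lia.
rewrite H_bot // (mxgetE' _ ph (ltn_ord (pos q))) /Dmat mxE.
have -> : Ordinal (ltn_ord (pos q)) = pos q by apply: val_inj.
by rewrite idx_grp_pos.
Qed.


Lemma MR_core (T : 'I_g -> {set 'I_(g * r)}) (Ec : {set 'I_(g * r)}) (Y : 'I_(g * r) -> L) :
  (forall i : 'I_g, T i \subset [set q : 'I_(g * r) | (q %/ r)%N == i] /\ #|T i| = a) ->
  #|Ec| = h -> [disjoint Ec & \bigcup_(i < g) T i] ->
  (forall p : 'I_(g * a + h), \sum_(q in Ec :|: \bigcup_(i < g) T i) Y q * H p q = 0) ->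
  forall q, q \in Ec :|: \bigcup_(i < g) T i -> Y q = 0.
Proof.
move=> hT hE hdis hrow.
set S := Ec :|: \bigcup_(i < g) T i.
have Tgrp i q : q \in T i -> grp q = i.
  move=> qT; have [/subsetP sub _] := hT i; have := sub q qT.
  by rewrite inE => /eqP e; apply: val_inj.
have TS i q : q \in T i -> q \in S.
  by move=> qT; rewrite /S inE; apply/orP; right; apply/bigcupP; exists i.
have EnT i q : q \in Ec -> q \notin T i.
  move=> qE; apply/negP => qT.
  by move: (disjointFr hdis qE); rewrite (_ : q \in _ = true) //; apply/bigcupP; exists i.
have SnE q : q \in S -> q \notin Ec -> q \in T (grp q).
  rewrite /S inE => /orP[-> //|/bigcupP[i _ qT] _].
  by rewrite (Tgrp _ _ qT).
have top (i : 'I_g) k (ka : (k < a)%N) :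
    \sum_(q in S | grp q == i) Y q * al (pos q) ^+ k = 0.
  have pl : (i * a + k < g * a + h)%N.
    have : (i.+1 * a <= g * a)%N by rewrite leq_mul2r ltn_ord orbT.
    by rewrite mulSn; lia.
  have pa : (Ordinal pl < g * a)%N.
    have : (i.+1 * a <= g * a)%N by rewrite leq_mul2r ltn_ord orbT.
    by rewrite /= mulSn; lia.
  rewrite -[RHS](hrow (Ordinal pl)) big_mkcondr; apply: eq_bigr => q _.
  rewrite Htop //= divnMDl // divn_small // addn0 modnMDl modn_small //.
  rewrite eq_sym -(inj_eq val_inj) /=.
  by case: ifP => //; rewrite mulr0.
have bot s (sh : (s < h)%N) : \sum_(q in S) Y q * gm q ^+ (Q ^ s) = 0.
  have pl : (g * a + s < g * a + h)%N by rewrite ltn_add2l.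
  have pa : ~~ (Ordinal pl < g * a)%N by rewrite /= -leqNgt leq_addr.
  rewrite -[RHS](hrow (Ordinal pl)); apply: eq_bigr => q _.
  by rewrite Hbot //= addKn.
have : forall t : 'I_(g * r), exists c : 'I_(g * r) -> F0, t \in Ec ->
    [/\ c t = 1, (forall q, q \notin T (grp t) -> q != t -> c q = 0) &
        forall k, (k < a)%N -> \sum_q c q * al0 (pos q) ^+ k = 0].
  move=> t; case: (boolP (t \in Ec)) => tE; last by exists (fun _ => 0).
  have inj : {in mem (T (grp t)) &, injective (fun q => al0 (pos q))}.
    move=> q q' qT q'T /al0inj; apply: pos_inj.
    by rewrite (Tgrp _ _ qT) (Tgrp _ _ q'T).
  have card : #|mem (T (grp t))| = a by have [_ ->] := hT (grp t).
  have [c [c1 c2 c3]] := kernel_vec inj card (EnT (grp t) t tE).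
  by exists c.
case/fin_all_exists => c hc.
have cgrp t q : t \in Ec -> c t q != 0 -> grp q = grp t.
  move=> tE; have [_ c2 _] := hc t tE.
  case: (boolP (q \in T (grp t))) => [/Tgrp //|qT].
  case: (eqVneq q t) => [-> //|qt].
  by rewrite c2 ?eqxx.
have cS t q : t \in Ec -> c t q != 0 -> q \in S.
  move=> tE; have [_ c2 _] := hc t tE.
  case: (boolP (q \in T (grp t))) => [/TS //|qT].
  case: (eqVneq q t) => [-> _|qt]; first by rewrite /S inE tE.
  by rewrite c2 ?eqxx.
have cdelta t t' : t \in Ec -> t' \in Ec -> c t t' = if t' == t then 1 else 0.
  move=> tE t'E; have [c1 c2 _] := hc t tE.
  case: (eqVneq t' t) => [-> //|tt]; by rewrite c2 ?EnT.
pose Y' q := if q \in S then Y q else 0.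
pose Z q := Y' q - \sum_(t in Ec) Y t * in_alg L (c t q).
have zE q : q \in Ec -> Z q = 0.
  move=> qE; rewrite /Z /Y' (_ : q \in S) ?inE ?qE // (bigD1 q) //=.
  rewrite cdelta // eqxx scale1r mulr1 big1 ?addr0 ?subrr // => t /andP[tE qt].
  by rewrite cdelta // eq_sym (negPf qt) scale0r mulr0.
have zNS q : q \notin S -> Z q = 0.
  move=> qS; rewrite /Z /Y' (negPf qS) sub0r big1 ?oppr0 // => t tE.
  case: (eqVneq (c t q) 0) => [-> |cn0]; first by rewrite rmorph0 mulr0.
  by move: qS; rewrite (cS t q tE cn0).
have zT i q : q \in T i -> Z q = 0.
  move=> qT; apply: (@vander_zero L _ (mem (T i)) (fun q => al (pos q)) Z a) => //.
  - move=> q1 q2 q1T q2T /fmorph_inj /al0inj; apply: pos_inj.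
    by rewrite (Tgrp _ _ q1T) (Tgrp _ _ q2T).
  - by have [_ ->] := hT i.
  move=> k ka.
  have -> : \sum_(q in mem (T i)) Z q * al (pos q) ^+ k =
            \sum_(q | grp q == i) Z q * al (pos q) ^+ k.
    rewrite [RHS](bigID (mem (T i))) /= [X in _ = _ + X]big1 ?addr0.
      by apply: eq_bigl => q'; rewrite andbC; case: (boolP (q' \in T i)) => // /Tgrp ->; rewrite eqxx.
    move=> q' /andP[/eqP gq' q'T].
    case: (boolP (q' \in S)) => q'S; last by rewrite zNS ?mul0r.
    case: (boolP (q' \in Ec)) => q'E; first by rewrite zE ?mul0r.
    by move: q'T; rewrite -gq' SnE.
  rewrite /Z.
  under eq_bigr => q' _ do rewrite mulrBl mulr_suml.
  rewrite sumrB exchange_big /=.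
  rewrite [X in X - _](_ : _ = \sum_(q in S | grp q == i) Y q * al (pos q) ^+ k); last first.
    rewrite [RHS]big_mkcondl /=; apply: eq_bigr => q' _.
    by rewrite /Y'; case: ifP => // _; rewrite mul0r.
  rewrite top // sub0r big1 ?oppr0 // => t tE.
  under eq_bigr => q' _ do rewrite -mulrA.
  rewrite -mulr_sumr.
  have [_ _ c3] := hc t tE.
  rewrite (_ : \sum_(q' | grp q' == i) _ = in_alg L (\sum_(q' | grp q' == i) c t q' * al0 (pos q') ^+ k)); last first.
    by rewrite rmorph_sum; apply: eq_bigr => q' _; rewrite rmorphM rmorphXn.
  case: (eqVneq (grp t) i) => [<-|gti].
    rewrite (_ : \sum_(q' | grp q' == grp t) _ = \sum_q' c t q' * al0 (pos q') ^+ k).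
      by rewrite c3 // rmorph0 mulr0.
    rewrite [RHS](bigID (fun q' => grp q' == grp t)) /= [X in _ = _ + X]big1 ?addr0 //.
    move=> q' gq'; case: (eqVneq (c t q') 0) => [->|cn0]; first by rewrite mul0r.
    by move: gq'; rewrite (cgrp t q' tE cn0) eqxx.
  rewrite big1 ?rmorph0 ?mulr0 // => q' /eqP gq'.
  case: (eqVneq (c t q') 0) => [->|cn0]; first by rewrite mul0r.
  by move: gti; rewrite -gq' (cgrp t q' tE cn0) eqxx.
have Z0 q : Z q = 0.
  case: (boolP (q \in S)) => qS; last exact: zNS.
  case: (boolP (q \in Ec)) => qE; first exact: zE.
  exact: zT (SnE q qS qE).
have dec q : Y' q = \sum_(t in Ec) Y t * in_alg L (c t q).
  by apply/eqP; rewrite -subr_eq0; apply/eqP; apply: Z0.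
pose mu t := \sum_q c t q *: gm q.
have YE : forall t, t \in Ec -> Y t = 0.
  apply: (@moore_pred F0 pc pcharF L _ (mem Ec) mu Y).
  - move=> b Hb t tE.
    pose d q := \sum_(t' in Ec) b t' * c t' q.
    have d0 : forall q, d q = 0.
      apply: (@gamma_indep F0 Ef L g r m x xinj rw hm [set grp t' | t' in Ec] d).
      + apply: leq_trans hgm; rewrite leq_min; apply/andP; split.
          by rewrite -hE leq_imset_card.
        by rewrite -[X in (_ <= X)%N](card_ord g) max_card.
      + move=> q qG; apply: big1 => t' t'E.
        case: (eqVneq (c t' q) 0) => [->|cn0]; first by rewrite mulr0.
        by move: qG; rewrite (cgrp t' q t'E cn0) imset_f.
      + rewrite -[RHS]Hb /mu.
        under eq_bigr => q _ do rewrite /d scaler_suml.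
        rewrite exchange_big /=; apply: eq_bigr => t' _.
        by rewrite scaler_sumr; apply: eq_bigr => q _; rewrite scalerA.
    have := d0 t; rewrite /d (bigD1 t) //= cdelta // eqxx mulr1 big1 ?addr0 //.
    move=> t' /andP[t'E tt']; by rewrite cdelta // eq_sym (negPf tt') mulr0.
  - move=> s sE; rewrite -[RHS](bot s); last by rewrite -hE.
    transitivity (\sum_q Y' q * gm q ^+ (Q ^ s)); last first.
      rewrite [RHS]big_mkcond; apply: eq_bigr => q _; rewrite /Y'.
      by case: ifP => //; rewrite mul0r.
    under [RHS]eq_bigr => q _ do rewrite dec mulr_suml.
    rewrite [RHS]exchange_big /=; apply: eq_bigr => t _.
    rewrite /mu (frob_sum pcharF) mulr_sumr; apply: eq_bigr => q _.
    by rewrite frobZ -mulrA mulr_algl.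
move=> q qS.
have := dec q; rewrite /Y' qS => ->.
by apply: big1 => t tE; rewrite YE ?mul0r.
Qed.

Hypothesis h0 : (0 < h)%N.

Lemma MR_construct : MR_LRC L g r h a.
Proof.
exists (fun _ => Amat), Dmat; split.
  move=> i; apply: vander_MDS => // j j'; rewrite /al => /fmorph_inj; exact: al0inj.
move=> T Ec hT hE hdis; rewrite /cols_independent.
set S := Ec :|: \bigcup_(i < g) T i.
have [t0 t0E] : exists t0, t0 \in Ec.
  by apply/card_gt0P; rewrite hE.
have t0S : t0 \in S by rewrite inE t0E.
apply: inj_row_free => y hy.
pose Y q := y 0 (enum_rank_in t0S q).
have YE k : Y (enum_val k) = y 0 k by rewrite /Y enum_valK_in.
have Y0 := @MR_core T Ec Y hT hE hdis.
apply/rowP => k; rewrite mxE -YE; apply: Y0; last exact: enum_valP.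
move=> p; rewrite big_enum_val.
have := congr1 (fun M : 'rV_(g * a + h) => M 0 p) hy; rewrite !mxE => e.
rewrite -[RHS]e; apply: eq_bigr => l _.
by rewrite YE !mxE.
Qed.

End Construct.

Lemma dim_ext (F0 : finFieldType) (L : fieldExtType F0) k :
  #|FinFieldExtType L| = (#|F0| ^ k)%N -> \dim {:L} = k.
Proof.
move=> cL.
have := card_vspace (fullv : {vspace finvect_type L}).
rewrite card_vspacef.
move=> e; apply: (expnI (finNzRing_gt1 F0)); rewrite -cL.
by rewrite e.
Qed.

Lemma nth_inj (T : finType) (x0 : T) n (nT : (n <= #|T|)%N) :
  injective (fun i : 'I_n => nth x0 (enum T) i).
Proof.
move=> i j e; apply: val_inj.
have /(uniqP x0) U := enum_uniq T.
apply: U e.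
  by rewrite inE -cardT; apply: leq_trans (ltn_ord i) nT.
by rewrite inE -cardT; apply: leq_trans (ltn_ord j) nT.
Qed.

Theorem theorem3p13 :
  exists C c : nat,
  forall a r h g n : nat,
    (0 < a)%N -> (0 < r)%N -> (0 < h)%N -> (0 < g)%N ->
    (g * a + h < g * r)%N -> n = (r * g)%N ->
    exists F : finFieldType,
      (#|F| <= (maxn (C * (n %/ r) * (trunc_log 2 (n %/ r)).+1 ^ c) ((2 * r) ^ r))
                ^ (minn h (n %/ r)))%N
      /\ MR_LRC F g r h a.
Proof.
exists 2%N, 1%N => a r h g n a0 r0 h0 g0 hlt ->.
rewrite mulKn //.
have ar : (a < r)%N.
  have : (g * a < g * r)%N by lia.
  by rewrite ltn_pmul2l.
have r1 : (1 < r)%N by lia.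
set u := up_log 2 r.
have [ul ur] := andP (up_log_bounds (p := 2) (isT : (1 < 2)%N) r1).
have u0 : (0 < u)%N by rewrite up_log_gt0 r1.
have [F0 pF0 cF0] := pPrimePowerField (p := 2) (k := u) (isT : prime 2) u0.
set q := (2 ^ u)%N in cF0 ur ul.
have q1 : (1 < q)%N by rewrite /q -{1}(expn0 2) ltn_exp2l.
have q2r : (q <= 2 * r)%N.
  by rewrite /q -(prednK u0) expnS leq_mul2l /= ltnW.
set w := maxn r (up_log q g).
have w0 : (0 < w)%N by rewrite /w leq_max (ltnW r1).
have [Ef cE] := ext_field pF0 w0.
set m := minn h g.
have m0 : (0 < m)%N by rewrite /m leq_min h0 g0.
have mw0 : (0 < m * w)%N by rewrite muln_gt0 m0 w0.
have [L cL] := ext_field pF0 mw0.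
have dE := dim_ext cE.
have dL := dim_ext cL.
have gq : (g <= q ^ w)%N.
  apply: leq_trans (up_logP g q1) _.
  by rewrite leq_exp2l // leq_maxr.
have gE : (g <= #|FinFieldExtType Ef|)%N by rewrite cE cF0.
have rF : (r <= #|F0|)%N by rewrite cF0.
pose x (i : 'I_g) : Ef := nth 0 (enum (FinFieldExtType Ef)) i.
have xinj : injective x := @nth_inj _ 0 _ gE.
pose al0 (j : 'I_r) : F0 := nth 0 (enum F0) j.
have al0inj : injective al0 := @nth_inj _ 0 _ rF.
have MR := @MR_construct F0 2 pF0 Ef L g r h a m x xinj al0 al0inj.
exists (FinFieldExtType L); split; last first.
  apply: MR => //.
  - by rewrite dE leq_maxl.
  - by rewrite dE dL.
  - exact: ltnW.
rewrite cL cF0 mulnC expnM.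
rewrite leq_exp2r //.
case: (leqP (up_log q g) r) => hw.
  have -> : w = r by rewrite /w; apply/maxn_idPl.
  by rewrite leq_max leq_exp2r ?q2r ?orbT // ltnW.
have ew : w = up_log q g by rewrite /w; apply/maxn_idPr; apply: ltnW.
have g1 : (1 < g)%N.
  rewrite ltnNge; apply/negP => g1; move: hw.
  have /eqP -> : up_log q g == 0%N by rewrite up_log_eq0 g1 orbT.
  by rewrite ltn0.
have [gl _] := andP (up_log_bounds q1 g1).
rewrite leq_max; apply/orP; left.
rewrite ew -(prednK (leq_ltn_trans (leq0n r) hw)) expnS.
set A := (q ^ (up_log q g).-1)%N in gl *.
have tl : (r <= trunc_log 2 g)%N.
  apply: trunc_log_max => //.
  apply: leq_trans (ltnW gl).
  apply: (@leq_trans (q ^ r)); first by rewrite leq_exp2r // ltnW.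
  by rewrite leq_exp2l // -ltnS prednK // (leq_ltn_trans (leq0n r) hw).
rewrite expn1.
have h1 : (q * A <= q * g)%N by rewrite leq_mul2l ltnW ?orbT.
have h2 : (q * g <= 2 * r * g)%N by rewrite leq_mul2r q2r orbT.
have h3 : (2 * r * g <= 2 * g * (trunc_log 2 g).+1)%N.
  by rewrite mulnAC leq_mul2l /= ltnW ?orbT // ltnS.
exact: leq_trans h1 (leq_trans h2 h3).
Qed.
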